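(* Let $(R,\mathfrak{m})$ satisfy condition $\bigstar$ with residue field $\mathbb{F}_q$, and suppose $\rho=\dim_{\mathbb{F}_q}\big(\mathfrak{m}/(\mathfrak{m}^2+pR)\big)$ is finite. Then the number of maximal subrings of $R$ with the same residue field as $R$ equals $\dfrac{q^{\rho}-1}{q-1}$ (in particular, it is $0$ when $\rho=0$).
   Context: All rings are commutative and unital. Condition $\bigstar$ on a ring $(R,\mathfrak{m})$: $R$ is a local ring (unique maximal ideal $\mathfrak{m}$, not necessarily Noetherian) of characteristic $p^N$ for a prime $p$ and some $N\ge 1$, with finite residue field $R/\mathfrak{m}\cong\mathbb{F}_q$, and $\mathfrak{m}$ is a nilpotent ideal. $\mathfrak{m}/(\mathfrak{m}^2+pR)$ is an $R/\mathfrak{m}$-vector space. A subring $S$ is local with $\mathfrak{m}_S=\mathfrak{m}\cap S$, its residue field naturally a subfield of $R/\mathfrak{m}$; a ''maximal subring with the same residue field as $R$'' is a proper subring with residue field $\mathbb{F}_q$ not properly contained in any other proper subring. *)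

(* Defs.v *)
From HB Require Import structures.
From mathcomp Require Import all_boot all_order all_algebra.
Set Implicit Arguments. Unset Strict Implicit. Unset Printing Implicit Defensive.
Import GRing.Theory.
Local Open Scope ring_scope.

Section Defs.
Variable R : comNzRingType.

(* subsets of R are Prop-valued predicates (R may be infinite). *)
Definition ideal (I : R -> Prop) : Prop :=
  I 0 /\ (forall x y, I x -> I y -> I (x + y)) /\ (forall r x, I x -> I (r * x)).

Definition proper_ideal (I : R -> Prop) : Prop := ideal I /\ ~ I 1.

Definition maximal_ideal (I : R -> Prop) : Prop :=
  proper_ideal I /\
  forall J, proper_ideal J -> (forall x, I x -> J x) -> forall x, J x -> I x.

Definition local_ring (m : R -> Prop) : Prop :=
  maximal_ideal m /\ forall J, maximal_ideal J -> forall x, J x <-> m x.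

Definition has_char (n : nat) : Prop :=
  (n%:R : R) = 0 /\ forall k : nat, (k%:R : R) = 0 -> (n %| k)%N.

(* R/m has exactly q elements: a system of q pairwise incongruent
   representatives covering all classes. *)
Definition residue_card (m : R -> Prop) (q : nat) : Prop :=
  exists reps : 'I_q -> R,
    (forall i j, m (reps i - reps j) -> i = j) /\
    (forall x, exists i, m (x - reps i)).

Definition nilpotent_ideal (m : R -> Prop) : Prop :=
  exists k : nat, forall a : 'I_k -> R, (forall i, m (a i)) -> \prod_i a i = 0.

Definition condition_star (p N q : nat) (m : R -> Prop) : Prop :=
  prime p /\ (0 < N)%N /\ has_char (p ^ N) /\ local_ring m /\
  residue_card m q /\ nilpotent_ideal m.

Definition in_m2_pR (p : nat) (m : R -> Prop) (y : R) : Prop :=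
  exists (n : nat) (a b : 'I_n -> R) (r : R),
    (forall i, m (a i) /\ m (b i)) /\ y = \sum_i a i * b i + p%:R * r.

(* dim_{R/m} m/(m^2+pR) = rho : there are rho elements of m whose classes
   form an R/m-basis of m/(m^2+pR) (scalars R/m represented by elements of R) *)
Definition cotangent_dim (p : nat) (m : R -> Prop) (rho : nat) : Prop :=
  exists x : 'I_rho -> R,
    (forall i, m (x i)) /\
    (forall y, m y -> exists c : 'I_rho -> R, in_m2_pR p m (y - \sum_i c i * x i)) /\
    (forall c : 'I_rho -> R, in_m2_pR p m (\sum_i c i * x i) -> forall i, m (c i)).

Definition subring (S : R -> Prop) : Prop :=
  S 1 /\ (forall x y, S x -> S y -> S (x - y)) /\ (forall x y, S x -> S y -> S (x * y)).

Definition proper_subring (S : R -> Prop) : Prop := subring S /\ exists x, ~ S x.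

(* the residue field S/(m ∩ S), viewed inside R/m, is all of R/m *)
Definition same_residue_field (m S : R -> Prop) : Prop :=
  forall x, exists s, S s /\ m (x - s).

Definition maximal_subring_same_residue (m S : R -> Prop) : Prop :=
  proper_subring S /\ same_residue_field m S /\
  forall T, proper_subring T -> (forall x, S x -> T x) -> forall x, T x -> S x.

(* the family P of subsets of R has exactly n members (up to extensional equality) *)
Definition exactly_n_members (P : (R -> Prop) -> Prop) (n : nat) : Prop :=
  exists f : 'I_n -> (R -> Prop),
    (forall i, P (f i)) /\
    (forall i j, (forall x, f i x <-> f j x) -> i = j) /\
    (forall S, P S -> exists i, forall x, S x <-> f i x).

End Defs.

(* Main.v *)
Require Import Defs.
From HB Require Import structures.
From mathcomp Require Import all_boot all_order all_algebra all_field.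
From Stdlib Require Import Classical ClassicalEpsilon.
From mathcomp Require Import ring.
Set Implicit Arguments. Unset Strict Implicit. Unset Printing Implicit Defensive.
Import GRing.Theory.
Local Open Scope ring_scope.

Section LA.
Variable K : fieldType.
Variable n : nat.

Definition lamK (c v : 'rV[K]_n) : K := \sum_i c 0 i * v 0 i.

Definition nrm (c : 'rV[K]_n) : bool :=
  [exists j : 'I_n, (c 0 j == 1) && [forall k : 'I_n, (k < j)%N ==> (c 0 k == 0)]].

Lemma first_nz (v : 'rV[K]_n) : v != 0 ->
  exists j : 'I_n, v 0 j != 0 /\ forall k : 'I_n, (k < j)%N -> v 0 k = 0.
Proof.
move=> v0.
have [i0 Hi0] : exists i, v 0 i != 0.
  apply/existsP; apply: contraNT v0 => /existsPn h; apply/eqP/rowP => j.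
  by rewrite mxE; apply/eqP; move/negPn: (h j).
case: (@arg_minnP _ i0 (fun i => v 0 i != 0) (fun i : 'I_n => nat_of_ord i) Hi0) => j Pj minj.
exists j; split => // k kj; apply/eqP; apply: contraTT kj => Pk.
by rewrite -leqNgt; apply: minj.
Qed.

Lemma nrm_neq0 c : nrm c -> c != 0.
Proof. by case/existsP => j /andP [/eqP c1 _]; apply/eqP => c0; move: c1; rewrite c0 mxE => /eqP; rewrite eq_sym oner_eq0. Qed.

Lemma nrm_normalize (v : 'rV[K]_n) : v != 0 ->
  exists j, v 0 j != 0 /\ nrm ((v 0 j)^-1 *: v).
Proof.
move=> /first_nz [j [vj0 vk]]; exists j; split => //.
apply/existsP; exists j; rewrite mxE mulVf // eqxx /=.
by apply/forallP => k; apply/implyP => kj; rewrite mxE (vk k kj) mulr0.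
Qed.

Lemma nrm_scale c b : nrm c -> nrm (b *: c) -> b = 1.
Proof.
case/existsP => j /andP [/eqP cj /forallP cz].
case/existsP => j' /andP [/eqP cj' /forallP cz'].
move: cj'; rewrite mxE => cj'.
have b0 : b != 0 by apply: contra_eq_neq cj' => ->; rewrite mul0r eq_sym oner_neq0.
case: (ltngtP j j') => h.
- have := implyP (cz' j) h; rewrite mxE cj mulr1 => /eqP b00; by move: b0; rewrite b00 eqxx.
- by have := implyP (cz j') h; move/eqP => c0; move: cj'; rewrite c0 mulr0 => /eqP; rewrite eq_sym oner_eq0.
- have jj : j' = j by apply: val_inj; rewrite /= h.
  by move: cj'; rewrite jj cj mulr1.
Qed.

Lemma lamK_delta c j : lamK c (delta_mx 0 j) = c 0 j.
Proof.
rewrite /lamK (bigD1 j) //= mxE !eqxx mulr1 big1 ?addr0 // => i /negPf ij.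
by rewrite mxE ij andbF mulr0.
Qed.

Lemma lamKD c u v : lamK c (u + v) = lamK c u + lamK c v.
Proof. by rewrite /lamK -big_split; apply: eq_bigr => i _; rewrite mxE mulrDr. Qed.
Lemma lamKZ c b v : lamK c (b *: v) = b * lamK c v.
Proof. by rewrite /lamK mulr_sumr; apply: eq_bigr => i _; rewrite mxE mulrCA. Qed.
Lemma lamKN c v : lamK c (- v) = - lamK c v.
Proof. by rewrite -scaleN1r lamKZ mulN1r. Qed.
Lemma lamKB c u v : lamK c (u - v) = lamK c u - lamK c v.
Proof. by rewrite lamKD lamKN. Qed.
Lemma lamKZl b c v : lamK (b *: c) v = b * lamK c v.
Proof. by rewrite /lamK mulr_sumr; apply: eq_bigr => i _; rewrite mxE mulrA. Qed.

Lemma nrm_inj c c' : nrm c -> nrm c' -> (forall v, lamK c v = 0 <-> lamK c' v = 0) -> c = c'.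
Proof.
move=> nc nc' H.
have [j [cj cz]] : exists j, c 0 j = 1 /\ forall k : 'I_n, (k < j)%N -> c 0 k = 0.
  by case/existsP: nc => j /andP [/eqP ? /forallP h]; exists j; split => // k kj; apply/eqP; exact: (implyP (h k) kj).
have e : c' = c' 0 j *: c.
  apply/rowP => k; rewrite mxE.
  pose v := delta_mx 0 k - c 0 k *: delta_mx 0 j : 'rV[K]_n.
  have : lamK c v = 0 by rewrite lamKB lamKZ !lamK_delta cj mulr1 subrr.
  move/H; rewrite lamKB lamKZ !lamK_delta => /eqP; rewrite subr_eq0 => /eqP ->.
  by rewrite mulrC.
have b1 : c' 0 j = 1 by apply: (nrm_scale nc); rewrite -e.
by rewrite e b1 scale1r.
Qed.
End LA.

Section LAfin.
Variable K : finFieldType.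
Variable n : nat.

Lemma hyperplane (U : 'rV[K]_n -> Prop) :
  U 0 -> (forall u v, U u -> U v -> U (u + v)) -> (forall b u, U u -> U (b *: u)) ->
  (exists v0, ~ U v0) -> exists c, nrm c /\ forall v, U v -> lamK c v = 0.
Proof.
move=> U0 UD UZ [v0 nU].
pose ub v : bool := if excluded_middle_informative (U v) then true else false.
have ubP : forall v, reflect (U v) (ub v) by move=> v; rewrite /ub; case: excluded_middle_informative => h; constructor.
pose Us := [set v | ub v].
pose A := \matrix_(i < #|Us|) (enum_val i : 'rV[K]_n).
have rowA : forall i, U (row i A) by move=> i; rewrite rowK; apply/ubP; have := enum_valP i; rewrite inE.
have rA : (\rank A < n)%N.
  rewrite ltn_neqAle rank_leq_col andbT; apply/negP => /eqP rf.
  have : row_full A by rewrite /row_full rf.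
  case/row_fullP => B BA; apply: nU.
  have -> : v0 = (v0 *m B) *m A by rewrite -mulmxA BA mulmx1.
  rewrite mulmx_sum_row; apply: (big_ind U) => // k _.
  by apply: UZ; apply: rowA.
set Kr := kermx A^T.
have Kr0 : Kr != 0.
  by rewrite -mxrank_eq0 /Kr mxrank_ker mxrank_tr subn_eq0 -ltnNge.
have [i wi] : exists i, row i Kr != 0.
  apply/existsP; apply: contraNT Kr0 => /existsPn h; apply/eqP/row_matrixP => i.
  by rewrite row0; apply/eqP; move/negPn: (h i).
set w := row i Kr.
have wA : w *m A^T = 0 by apply/sub_kermxP; exact: row_sub.
have lw : forall k, lamK w (row k A) = 0.
  move=> k; have := congr1 (fun M : 'rV[K]_#|Us| => M 0 k) wA.
  by rewrite !mxE => <-; apply: eq_bigr => j _; rewrite !mxE.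
have [j [wj0 nc]] := nrm_normalize wi.
exists ((w 0 j)^-1 *: w); split => // v Uv.
have vU : v \in Us by rewrite inE; apply/ubP.
rewrite lamKZl -(enum_rankK_in vU vU).
by have := lw (enum_rank_in vU v); rewrite rowK => ->; rewrite mulr0.
Qed.

Lemma count_nrm : (#|[set c : 'rV[K]_n | nrm c]| * (#|K|.-1) = (#|K| ^ n).-1)%N.
Proof.
pose f := fun ac : K * 'rV[K]_n => ac.1 *: ac.2.
pose Dm := setX [set~ (0 : K)] [set c : 'rV[K]_n | nrm c].
have inj : {in Dm &, injective f}.
  move=> [a c] [a' c']; rewrite !inE /= => /andP [a0 nc] /andP [a0' nc'] e.
  have e' : a *: c = a' *: c' := e.
  have e2 : c' = (a'^-1 * a) *: c by rewrite -scalerA e' scalerA mulVf // scale1r.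
  have b1 : a'^-1 * a = 1 by apply: (nrm_scale nc); rewrite -e2.
  have aa : a = a' by apply: (mulfI (invr_neq0 a0')); rewrite b1 mulVf.
  by subst a; rewrite e2 b1 scale1r.
have im : [set f x | x in Dm] = [set~ (0 : 'rV[K]_n)].
  apply/setP => v; rewrite !inE; apply/imsetP/idP.
  - case=> [[a c]]; rewrite !inE /= => /andP [a0 nc] ->; rewrite /f /= scaler_eq0 negb_or a0 /=.
    exact: nrm_neq0.
  - move=> v0; have [j [vj nc]] := nrm_normalize v0.
    exists (v 0 j, (v 0 j)^-1 *: v); first by rewrite !inE vj.
    by rewrite /f /= scalerA mulfV // scale1r.
have := card_in_imset inj; rewrite im cardsC1 cardsX cardsC1 card_mx mul1n => ->.
by rewrite mulnC.
Qed.
End LAfin.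
Local Open Scope ring_scope.

Section Basic.
Variable R : comNzRingType.
Variable m : R -> Prop.
Hypothesis mmax : local_ring m.

Lemma m0 : m 0. Proof. by case: mmax => [[[[H _] _] _] _]. Qed.
Lemma mD a b : m a -> m b -> m (a + b).
Proof. by case: mmax => [[[[_ [H _]] _] _] _]; apply: H. Qed.
Lemma mM r a : m a -> m (r * a).
Proof. by case: mmax => [[[[_ [_ H]] _] _] _]; apply: H. Qed.
Lemma mMr r a : m a -> m (a * r).
Proof. by move=> ?; rewrite mulrC; apply: mM. Qed.
Lemma mN a : m a -> m (- a).
Proof. by move=> ?; rewrite -mulN1r; apply: mM. Qed.
Lemma mB a b : m a -> m b -> m (a - b).
Proof. by move=> ??; apply: mD => //; apply: mN. Qed.
Lemma m1 : ~ m 1. Proof. by case: mmax => [[[_ H] _] _]. Qed.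
Lemma mBr a b : m (a - b) -> m (b - a).
Proof. by move=> /mN; rewrite opprB. Qed.
Lemma msum (I : finType) (F : I -> R) : (forall i, m (F i)) -> m (\sum_i F i).
Proof. by move=> H; elim/big_ind: _ => //; [exact: m0 | exact: mD]. Qed.

Lemma m_inv a : ~ m a -> exists b, m (1 - a * b).
Proof.
move=> na.
pose J y := exists r t, m t /\ y = t + r * a.
apply: NNPP => nex.
have pJ : Defs.proper_ideal J.
  split; first split.
  - by exists 0, 0; split; [exact: m0 | rewrite mul0r addr0].
  - split.
    + move=> y z [r [t [mt ->]]] [r' [t' [mt' ->]]].
      exists (r + r'), (t + t'); split; first exact: mD.
      by rewrite mulrDl addrACA.
    + move=> r y [r' [t [mt ->]]]; exists (r * r'), (r * t); split; first exact: mM.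
      by rewrite mulrDr mulrA.
  - move=> [r [t [mt e]]]; apply: nex; exists r.
    have -> : 1 - a * r = t by rewrite e mulrC addrK.
    done.
case: mmax => [[_ Hmax]] _.
apply: na; apply: (Hmax J pJ).
- by move=> y my; exists 0, y; rewrite mul0r addr0.
- by exists 1, 0; split; [exact: m0 | rewrite mul1r add0r].
Qed.

Lemma m_prime a b : m (a * b) -> m a \/ m b.
Proof.
move=> mab; case: (classic (m a)) => ma; [by left | right].
have [c mc] := m_inv ma.
have -> : b = b * (1 - a * c) + c * (a * b) by ring.
by apply: mD; [apply: mM | apply: mM].
Qed.

Lemma m_exp a n : m (a ^+ n.+1) -> m a.
Proof.
elim: n => [|n IH]; first by rewrite expr1.
by rewrite exprS => /m_prime [//|/IH].
Qed.

Variable p : nat.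
Hypothesis mp : m p%:R.
Local Notation J := (in_m2_pR p m).

Lemma J0 : J 0.
Proof.
exists 0%N, (fun _ => 0), (fun _ => 0), 0; split; first by case.
by rewrite big_ord0 mulr0 addr0.
Qed.

Lemma JD a b : J a -> J b -> J (a + b).
Proof.
move=> [n [u [v [r [Hm ->]]]]] [n' [u' [v' [r' [Hm' ->]]]]].
pose U := fun k : 'I_(n + n') => match split k with inl i => u i | inr i => u' i end.
pose V := fun k : 'I_(n + n') => match split k with inl i => v i | inr i => v' i end.
exists (n + n')%N, U, V, (r + r'); split.
  by move=> k; rewrite /U /V; case: (split k) => i; [apply: Hm | apply: Hm'].
have e1 : \sum_(i < n) U (lshift n' i) * V (lshift n' i) = \sum_(i < n) u i * v i.
  by apply: eq_bigr => i _; rewrite /U /V (unsplitK (inl i)).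
have e2 : \sum_(i < n') U (rshift n i) * V (rshift n i) = \sum_(i < n') u' i * v' i.
  by apply: eq_bigr => i _; rewrite /U /V (unsplitK (inr i)).
rewrite big_split_ord /= e1 e2 mulrDr; ring.
Qed.

Lemma JM r a : J a -> J (r * a).
Proof.
move=> [n [u [v [r' [Hm ->]]]]].
exists n, (fun i => r * u i), v, (r * r'); split.
  by move=> i; have [h1 h2] := Hm i; split => //; apply: mM.
by rewrite mulrDr mulr_sumr; congr (_ + _); [apply: eq_bigr => i _; rewrite mulrA | ring].
Qed.

Lemma JN a : J a -> J (- a).
Proof. by move=> ?; rewrite -mulN1r; apply: JM. Qed.
Lemma JB a b : J a -> J b -> J (a - b).
Proof. by move=> ??; apply: JD => //; apply: JN. Qed.
Lemma Jmm a b : m a -> m b -> J (a * b).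
Proof.
move=> ma mb; exists 1%N, (fun _ => a), (fun _ => b), 0; split => //.
by rewrite big_ord1 mulr0 addr0.
Qed.
Lemma Jp r : J (p%:R * r).
Proof. by exists 0%N, (fun _ => 0), (fun _ => 0), r; split; [case | rewrite big_ord0 add0r]. Qed.
Lemma Jm a : J a -> m a.
Proof.
move=> [n [u [v [r [Hm ->]]]]]; apply: mD => //; last by apply: mMr.
by apply: msum => // i; apply: mMr => //; case: (Hm i).
Qed.
Lemma Jsum (I : finType) (F : I -> R) : (forall i, J (F i)) -> J (\sum_i F i).
Proof. by move=> H; elim/big_ind: _ => //; [exact: J0 | exact: JD]. Qed.
Lemma JBr a b : J (a - b) -> J (b - a).
Proof. by move=> /JN; rewrite opprB. Qed.
Lemma Jtrans a b c : J (a - b) -> J (b - c) -> J (a - c).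
Proof. by move=> h1 h2; have := JD h1 h2; rewrite addrA subrK. Qed.

Hypothesis pprime : prime p.
Variable q e : nat.
Hypothesis qe : q = (p ^ e)%N.
Hypothesis e_gt0 : (0 < e)%N.
Hypothesis Fq : forall y : R, m (y ^+ q - y).

Lemma J_XX u v k : J (u - v) -> J (u ^+ k - v ^+ k).
Proof. by move=> h; rewrite subrXX mulrC; apply: JM. Qed.

Lemma frobp a b : J ((a + b) ^+ p - a ^+ p - b ^+ p).
Proof.
have [p' pE] : exists p', p = p'.+1 by case: (p) pprime => // n _; exists n.
have E : forall x : R, x ^+ p = x ^+ p'.+1 by rewrite pE.
rewrite !E exprDn big_ord_recl big_ord_recr /= /bump /= !add1n subn0 subnn.
rewrite expr0 mulr1 bin0 mulr1n expr0 mul1r binn mulr1n.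
have -> : forall A B C : R, A + (B + C) - A - C = B by move=> A B C; ring.
apply: Jsum => i.
have hd : (p %| 'C(p'.+1, i.+1))%N.
  rewrite -pE; apply: prime_dvd_bin => //; rewrite pE ltnS; apply/andP; split => //; exact: ltn_ord.
move: hd => /dvdnP [k ->]; rewrite mulrnA -[_ *+ p]mulr_natl.
exact: Jp.
Qed.

Lemma frobe a b k : J ((a + b) ^+ (p ^ k) - a ^+ (p ^ k) - b ^+ (p ^ k)).
Proof.
elim: k => [|k IH]; first by rewrite !expn0 !expr1 (_ : a + b - a - b = 0); [exact: J0 | ring].
rewrite expnSr !exprM.
set u := (a + b) ^+ (p ^ k); set A := a ^+ (p ^ k); set B := b ^+ (p ^ k).
have h1 : J (u ^+ p - (A + B) ^+ p) by apply: J_XX; rewrite opprD addrA.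
have h2 := frobp A B.
have := JD h1 h2.
by have -> : u ^+ p - (A + B) ^+ p + ((A + B) ^+ p - A ^+ p - B ^+ p) = u ^+ p - A ^+ p - B ^+ p by ring.
Qed.

Lemma q_ge2 : (2 <= q)%N.
Proof.
rewrite qe; have p2 := prime_gt1 pprime.
by apply: leq_trans p2 _; rewrite -{1}(expn1 p) leq_pexp2l // prime_gt0.
Qed.

Lemma tau_add a b : J ((a + b) ^+ q - (a ^+ q + b ^+ q)).
Proof. by rewrite qe opprD addrA; apply: frobe. Qed.

Lemma tau_m n : m n -> J (n ^+ q).
Proof.
move=> mn; have := q_ge2; case: q => [|[|k]] // _.
by rewrite !exprS mulrA; rewrite -mulrA; apply: Jmm => //; apply: mMr.
Qed.

Lemma tau_cong a b : m (a - b) -> J (a ^+ q - b ^+ q).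
Proof.
move=> mab.
have h := tau_add b (a - b); have ee : b + (a - b) = a by ring. rewrite ee in h.
have h2 := tau_m mab.
have := JD h h2.
by have -> : a ^+ q - (b ^+ q + (a - b) ^+ q) + (a - b) ^+ q = a ^+ q - b ^+ q by ring.
Qed.

Lemma tau_id a : J ((a ^+ q) ^+ q - a ^+ q).
Proof. exact: tau_cong (Fq a). Qed.

Definition D (a : R) := a - a ^+ q.

Lemma D_m a : m (D a).
Proof. exact: mBr (Fq a). Qed.

Lemma D_add a b : J (D (a + b) - (D a + D b)).
Proof.
rewrite /D; have -> : a + b - (a + b) ^+ q - (a - a ^+ q + (b - b ^+ q)) = - ((a + b) ^+ q - (a ^+ q + b ^+ q)) by ring.
by apply: JN; apply: tau_add.
Qed.

Lemma tau_opp a : J ((- a) ^+ q + a ^+ q).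
Proof.
have h := tau_add a (- a).
rewrite subrr expr0n /= (gtn_eqF (leq_trans _ q_ge2)) // sub0r in h.
by move: (JN h); rewrite opprK addrC.
Qed.

Lemma D_opp a : J (D (- a) + D a).
Proof.
rewrite /D; have -> : - a - (- a) ^+ q + (a - a ^+ q) = - ((- a) ^+ q + a ^+ q) by ring.
by apply: JN; apply: tau_opp.
Qed.

Lemma D_sub a b : J (D (a - b) - (D a - D b)).
Proof.
have h1 := D_add a (- b); have h2 := D_opp b.
have := JD h1 h2.
by have -> : D (a - b) - (D a + D (- b)) + (D (- b) + D b) = D (a - b) - (D a - D b) by ring.
Qed.

Lemma D_mul a b : D (a * b) = b * D a + a ^+ q * D b.
Proof. by rewrite /D exprMn; ring. Qed.

Lemma D_1 : D 1 = 0.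
Proof. by rewrite /D expr1n subrr. Qed.

Lemma D_tau a : J (D (a ^+ q)).
Proof. by rewrite /D; apply: JBr; apply: tau_id. Qed.

Lemma D_inm a : m a -> J (D a - a).
Proof. by move=> ma; rewrite /D addrAC subrr sub0r; apply: JN; apply: tau_m. Qed.
Definition mb (y : R) : bool := if excluded_middle_informative (m y) then true else false.
Lemma mbP y : reflect (m y) (mb y).
Proof. by rewrite /mb; case: excluded_middle_informative => h; constructor. Qed.

Lemma mb_ideal : idealr_closed mb.
Proof.
split; first by apply/mbP; exact: m0.
  by apply/mbP; exact: m1.
by move=> a u v /mbP hu /mbP hv; apply/mbP; apply: mD => //; apply: mM.
Qed.

HB.instance Definition _ := isIdealr.Build R mb mb_ideal.

Definition mbI : idealr R := mb.
Definition F := {ideal_quot mbI}.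
Local Open Scope quotient_scope.
HB.instance Definition _ := GRing.ComNzRing.on F.
HB.instance Definition _ := EqQuotient.on F.
Lemma piE (a b : R) : (\pi_F a = \pi_F b) <-> m (a - b).
Proof.
split => [/eqP|h]; first by rewrite -Quotient.idealrBE => /mbP.
by apply/eqP; rewrite -Quotient.idealrBE; apply/mbP.
Qed.

Lemma pi_repr (a : R) : m (repr (\pi_F a) - a).
Proof. by apply/piE; rewrite reprK. Qed.

Lemma pi0 (a : R) : (\pi_F a = 0) <-> m a.
Proof. by rewrite -(rmorph0 (\pi_F)) piE subr0. Qed.

Definition finv (x : F) : F :=
  if x == 0 then 0 else \pi_F (epsilon (inhabits 0) (fun b => m (1 - repr x * b))).

Lemma finv_mulV (x : F) : x != 0 -> finv x * x = 1.
Proof.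
move=> /negPf x0; rewrite /finv x0.
have nm : ~ m (repr x).
  by move=> h; move: x0; rewrite -[x]reprK; move/pi0: h => ->; rewrite eqxx.
have := epsilon_spec (inhabits 0) (fun b => m (1 - repr x * b)) (m_inv nm).
set b := epsilon _ _ => hb.
rewrite -[x]reprK -rmorphM -(rmorph1 (\pi_F)); apply/piE.
by apply: mBr; rewrite mulrC.
Qed.

Lemma finv0 : finv 0 = 0.
Proof. by rewrite /finv eqxx. Qed.

HB.instance Definition _ := GRing.ComNzRing_isField.Build F finv_mulV finv0.

Variable reps : 'I_q -> R.
Hypothesis reps_inj : forall i j, m (reps i - reps j) -> i = j.
Hypothesis reps_surj : forall y, exists i, m (y - reps i).

Lemma reps_ex (x : F) : exists i, mb (repr x - reps i).
Proof. by have [i h] := reps_surj (repr x); exists i; apply/mbP. Qed.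

Definition fidx (x : F) : 'I_q := xchoose (reps_ex x).
Definition fval (i : 'I_q) : F := \pi_F (reps i).

Lemma fidxK : cancel fidx fval.
Proof.
move=> x; rewrite /fval -[RHS]reprK; apply/piE.
by apply: mBr; apply/mbP; exact: (xchooseP (reps_ex x)).
Qed.

Lemma fvalK : cancel fval fidx.
Proof.
move=> i; rewrite /fidx; have /mbP h := xchooseP (reps_ex (fval i)).
symmetry; apply: reps_inj.
have h2 := pi_repr (reps i).
by have := mD (mBr h2) h; rewrite /fval; have -> : forall a b c : R, a - b + (b - c) = a - c by move=> *; ring.
Qed.

HB.instance Definition _ := CanIsCountable fidxK.
HB.instance Definition _ : isFinite F := CanIsFinite fidxK.

Lemma cardF : #|{: F}| = q.
Proof. by rewrite (bij_eq_card (f := fidx)) ?card_ord //; exists fval; [exact: fidxK | exact: fvalK]. Qed.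

Lemma Fq_F (y : R) : m (y ^+ q - y).
Proof.
apply/piE; rewrite rmorphXn /=; rewrite -cardF.
exact: (@expf_card F).
Qed.

Lemma pcharF : p \in [pchar F].
Proof.
apply/andP; split => //; apply/eqP.
by rewrite -(rmorph_nat (\pi_F)) /=; apply/pi0.
Qed.

Lemma q_pow : q = (p ^ logn p q)%N.
Proof.
have := card_pprimeChar pcharF.
by rewrite /pPrimeCharType cardF.
Qed.

Lemma logq_gt0 : (0 < logn p q)%N.
Proof.
have h : (1 < q)%N by rewrite -cardF; exact: (finNzRing_gt1 F).
by move: h; rewrite {1}q_pow; case: (logn p q) => //; rewrite expn0.
Qed.

Variable rho : nat.
Variable x : 'I_rho -> R.
Hypothesis hx_m : forall i, m (x i).
Hypothesis hx_span : forall y, m y -> exists c : 'I_rho -> R, J (y - \sum_i c i * x i).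
Hypothesis hx_ind : forall c : 'I_rho -> R, J (\sum_i c i * x i) -> forall i, m (c i).

Definition dd (y : R) : 'I_rho -> R :=
  epsilon (inhabits (fun _ => 0)) (fun d : 'I_rho -> R => J (y - \sum_i d i * x i)).
Definition crd (y : R) : 'rV[F]_rho := \row_i \pi_F (dd y i).

Lemma crd_spec y : m y -> J (y - \sum_i dd y i * x i).
Proof. by move=> my; apply: (epsilon_spec (inhabits (fun _ => 0)) (fun d : 'I_rho -> R => J (y - \sum_i d i * x i))); apply: hx_span. Qed.

Lemma crd_uniq y (d : 'I_rho -> R) : m y -> J (y - \sum_i d i * x i) -> crd y = \row_i \pi_F (d i).
Proof.
move=> my hd; apply/rowP => i; rewrite !mxE; apply/piE.
have h := JB hd (crd_spec my).
have ee : y - \sum_i d i * x i - (y - \sum_i dd y i * x i) = \sum_i (dd y i - d i) * x i.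
  by rewrite (_ : forall A B C : R, A - B - (A - C) = C - B); [rewrite -sumrB; apply: eq_bigr => k _; rewrite mulrBl | move=> *; ring].
by rewrite ee in h; exact: hx_ind h i.
Qed.

Lemma crd_add y z : m y -> m z -> crd (y + z) = crd y + crd z.
Proof.
move=> my mz; rewrite (@crd_uniq _ (fun i => dd y i + dd z i)); first by apply/rowP => i; rewrite !mxE rmorphD.
  exact: mD.
have := JD (crd_spec my) (crd_spec mz).
have -> : \sum_i (dd y i + dd z i) * x i = \sum_i dd y i * x i + \sum_i dd z i * x i by rewrite -big_split; apply: eq_bigr => i _; rewrite mulrDl.
by move=> h; have -> : forall A B C D : R, A + B - (C + D) = A - C + (B - D) by move=> *; ring.
Qed.

Lemma crd_scale r y : m y -> crd (r * y) = \pi_F r *: crd y.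
Proof.
move=> my; rewrite (@crd_uniq _ (fun i => r * dd y i)); first by apply/rowP => i; rewrite !mxE rmorphM.
  exact: mM.
have := JM r (crd_spec my).
by rewrite mulrBr mulr_sumr; under eq_bigr do rewrite mulrA.
Qed.

Lemma crd_J y : J y -> crd y = 0.
Proof.
move=> jy; rewrite (@crd_uniq _ (fun _ => 0)); first by apply/rowP => i; rewrite !mxE rmorph0.
  exact: Jm.
by rewrite big1 ?subr0 // => i _; rewrite mul0r.
Qed.

Lemma crd_eq0 y : m y -> crd y = 0 -> J y.
Proof.
move=> my c0; have h := crd_spec my.
have hm : forall i, m (dd y i).
  by move=> i; apply/pi0; have := congr1 (fun v : 'rV[F]_rho => v 0 i) c0; rewrite !mxE.
have hs : J (\sum_i dd y i * x i) by apply: Jsum => i; apply: Jmm.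
by have := JD h hs; rewrite subrK.
Qed.

Lemma crd_opp y : m y -> crd (- y) = - crd y.
Proof. by move=> my; rewrite -mulN1r crd_scale // rmorphN rmorph1 scaleN1r. Qed.

Lemma crd_sub y z : m y -> m z -> crd (y - z) = crd y - crd z.
Proof. by move=> my mz; rewrite crd_add ?crd_opp //; exact: mN. Qed.

Lemma crd_congr y z : m y -> J (y - z) -> crd y = crd z.
Proof.
move=> my jyz; have mz : m z by have := mB my (Jm jyz); rewrite opprB addrC subrK.
by apply/eqP; rewrite -subr_eq0 -crd_sub //; apply/eqP; apply: crd_J.
Qed.

Lemma crd_x j : crd (x j) = delta_mx 0 j.
Proof.
rewrite (@crd_uniq _ (fun i => (i == j)%:R)) //.
  by apply/rowP => i; rewrite !mxE eqxx /=; case: (i == j); rewrite ?rmorph1 ?rmorph0 // eq_sym; case: eqP => // <-; rewrite ?rmorph1.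
rewrite (bigD1 j) //= eqxx mul1r big1 ?addr0 ?subrr; first exact: J0.
by move=> i /negPf ->; rewrite mul0r.
Qed.

Lemma crd_surj (v : 'rV[F]_rho) : exists z, m z /\ crd z = v.
Proof.
exists (\sum_i repr (v 0 i) * x i); split; first by apply: msum => i; apply: mM.
rewrite (@crd_uniq _ (fun i => repr (v 0 i))); first by apply/rowP => i; rewrite !mxE reprK.
  by apply: msum => i; apply: mM.
rewrite subrr; exact: J0.
Qed.

Definition lam (c v : 'rV[F]_rho) : F := \sum_i c 0 i * v 0 i.

Lemma lamD c u v : lam c (u + v) = lam c u + lam c v.
Proof. by rewrite /lam -big_split; apply: eq_bigr => i _; rewrite mxE mulrDr. Qed.
Lemma lamZ c b v : lam c (b *: v) = b * lam c v.
Proof. by rewrite /lam mulr_sumr; apply: eq_bigr => i _; rewrite mxE mulrCA. Qed.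
Lemma lam0 c : lam c 0 = 0.
Proof. by rewrite /lam big1 // => i _; rewrite mxE mulr0. Qed.
Lemma lamN c v : lam c (- v) = - lam c v.
Proof. by rewrite -scaleN1r lamZ mulN1r. Qed.
Lemma lamB c u v : lam c (u - v) = lam c u - lam c v.
Proof. by rewrite lamD lamN. Qed.
Lemma lam_delta c j : lam c (delta_mx 0 j) = c 0 j.
Proof.
rewrite /lam (bigD1 j) //= mxE !eqxx mulr1 big1 ?addr0 // => i /negPf ij.
by rewrite mxE ij andbF mulr0.
Qed.

Definition Sc (c : 'rV[F]_rho) (y : R) : Prop := lam c (crd (D y)) = 0.

Lemma crdD_add a b : crd (D (a + b)) = crd (D a) + crd (D b).
Proof. by rewrite (crd_congr (D_m _) (D_add a b)) crd_add //; apply: D_m. Qed.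
Lemma crdD_sub a b : crd (D (a - b)) = crd (D a) - crd (D b).
Proof. by rewrite (crd_congr (D_m _) (D_sub a b)) crd_sub //; apply: D_m. Qed.
Lemma piq a : \pi_F (a ^+ q) = \pi_F a.
Proof. by apply/piE; apply: Fq. Qed.
Lemma crdD_mul a b : crd (D (a * b)) = \pi_F b *: crd (D a) + \pi_F a *: crd (D b).
Proof.
rewrite D_mul crd_add; try by apply: mM; apply: D_m.
by rewrite !crd_scale ?piq //; apply: D_m.
Qed.
Lemma crdD_1 : crd (D 1) = 0.
Proof. by rewrite D_1; apply: crd_J; exact: J0. Qed.
Lemma crdD_tau a : crd (D (a ^+ q)) = 0.
Proof. exact: crd_J (D_tau a). Qed.
Lemma crdD_m a : m a -> crd (D a) = crd a.
Proof. by move=> ma; apply: crd_congr; [apply: D_m | apply: D_inm]. Qed.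

Lemma Sc_subring c : subring (Sc c).
Proof.
rewrite /Sc; split; first by rewrite crdD_1 lam0.
split => a b ha hb; first by rewrite crdD_sub lamB ha hb subrr.
by rewrite crdD_mul lamD !lamZ ha hb !mulr0 addr0.
Qed.
Lemma Sc_tau c a : Sc c (a ^+ q).
Proof. by rewrite /Sc crdD_tau lam0. Qed.
Lemma Sc_m c a : m a -> (Sc c a <-> lam c (crd a) = 0).
Proof. by move=> ma; rewrite /Sc crdD_m. Qed.
Lemma Sc_res c : same_residue_field m (Sc c).
Proof. by move=> y; exists (y ^+ q); split; [apply: Sc_tau | apply: mBr; apply: Fq]. Qed.

Lemma Sc_proper c : c != 0 -> proper_subring (Sc c).
Proof.
move=> c0; split; first exact: Sc_subring.
have [j cj] : exists j, c 0 j != 0.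
  apply/existsP; apply: contraNT c0 => /existsPn h; apply/eqP/rowP => j.
  by rewrite mxE; apply/eqP; move/negPn: (h j).
exists (x j); rewrite (Sc_m _ (hx_m j)) crd_x lam_delta; exact/eqP.
Qed.

Lemma Sc_max c (T : R -> Prop) : c != 0 -> proper_subring T -> (forall y, Sc c y -> T y) ->
  forall y, T y -> Sc c y.
Proof.
move=> c0 [[T1 [TB TM]] [w0 nT]] sub y Ty; apply: NNPP => nS; apply: nT.
have T0 : T 0 by rewrite -(subrr 1); apply: (TB).
have TD : forall a b, T a -> T b -> T (a + b).
  by move=> a b ha hb; rewrite -[b]opprK; apply: (TB) => //; rewrite -sub0r; apply: (TB).
have Tq : forall a, T (a ^+ q) by move=> a; apply: (sub); apply: Sc_tau.
set z := D y.
have Tz : T z by apply: (TB) => //.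
have mz : m z := D_m y.
set a := lam c (crd z).
have a0 : a != 0 by apply/eqP.
suff TDw : forall w, T (D w).
  by have := TD _ _ (Tq w0) (TDw w0); rewrite /D addrC subrK.
move=> w; set v := crd (D w).
set b := lam c v / a.
set bt := repr b.
have e1 : D w = (D w - bt ^+ q * z) + bt ^+ q * z by rewrite subrK.
rewrite e1; apply: (TD); last by apply: (TM).
apply: (sub); rewrite Sc_m; last by apply: mB; [apply: D_m | apply: mM].
rewrite crd_sub ?crd_scale //; [|apply: D_m | apply: mM => //].
rewrite lamB lamZ piq reprK -/v -/a /b mulfVK //; exact: subrr.
Qed.

Hypothesis mnil : nilpotent_ideal m.

Definition gen (X : R -> Prop) (y : R) : Prop :=
  forall G : R -> Prop, G 0 -> (forall a b, G a -> G b -> G (a - b)) -> (forall a, X a -> G a) -> G y.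

Fixpoint pw (j : nat) : R -> Prop :=
  match j with
  | 0 => fun _ => True
  | j'.+1 => gen (fun y => exists a b, m a /\ pw j' b /\ y = a * b)
  end.

Lemma pw_0 j : pw j 0.
Proof. by case: j => [//|j] G. Qed.
Lemma pw_B j a b : pw j a -> pw j b -> pw j (a - b).
Proof. case: j => [//|j] /= ha hb G G0 GB GX; apply: (GB); [exact: (ha G G0 GB GX) | exact: (hb G G0 GB GX)]. Qed.
Lemma pw_D j a b : pw j a -> pw j b -> pw j (a + b).
Proof.
move=> ha hb; have -> : a + b = a - (0 - b) by rewrite sub0r opprK.
by apply: pw_B => //; apply: pw_B => //; apply: pw_0.
Qed.
Lemma pw_gen j a b : m a -> pw j b -> pw j.+1 (a * b).
Proof. by move=> ma hb G G0 GB GX; apply: GX; exists a, b. Qed.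
Lemma pw1 a : m a -> pw 1 a.
Proof. by move=> ma; rewrite -[a]mulr1; apply: pw_gen. Qed.
Lemma pw_M j r y : pw j y -> pw j (r * y).
Proof.
elim: j r y => [//|j IH] r y hy.
apply: (hy (fun y => pw j.+1 (r * y))).
- by rewrite mulr0; apply: pw_0.
- by move=> a b ha hb; rewrite mulrBr; apply: pw_B.
- by move=> _ [a [b [ma [hb ->]]]]; rewrite mulrCA; apply: pw_gen => //; apply: IH.
Qed.
Lemma pw_sum j (I : finType) (G : I -> R) : (forall i, pw j (G i)) -> pw j (\sum_i G i).
Proof. by move=> H; elim/big_ind: _ => //; [apply: pw_0 | move=> ??; apply: pw_D]. Qed.

Lemma nil_ge k : (forall a : 'I_k -> R, (forall i, m (a i)) -> \prod_i a i = 0) ->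
  forall t, (k <= t)%N -> forall a : 'I_t -> R, (forall i, m (a i)) -> \prod_i a i = 0.
Proof.
move=> hk; elim=> [|t IH] hkt a ha.
  have k0 : k = 0%N by apply/eqP; rewrite -leqn0.
  by subst k; apply: hk.
move: hkt; rewrite leq_eqVlt => /orP [/eqP kt|hkt].
  by subst k; apply: hk.
by rewrite big_ord_recl IH ?mulr0.
Qed.

Lemma pw_nil : exists k, forall j y, (k <= j)%N -> pw j y -> y = 0.
Proof.
case: mnil => k hk; exists k.
suff H : forall j y, pw j y -> forall t (a : 'I_t -> R), (forall i, m (a i)) -> (k <= j + t)%N -> y * \prod_i a i = 0.
  by move=> j y kj hy; have := H j y hy 0%N (fun _ => 0) (fun i => match i with Ordinal _ h => False_ind _ (notF h) end); rewrite big_ord0 mulr1 addn0; apply.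
elim=> [|j IH] y hy t a ha hkt.
  by rewrite (nil_ge hk hkt ha) mulr0.
apply: (hy (fun y => forall t (a : 'I_t -> R), (forall i, m (a i)) -> (k <= j.+1 + t)%N -> y * \prod_i a i = 0)) => //.
- by move=> *; rewrite mul0r.
- by move=> u v hu hv t' a' ha' hk'; rewrite mulrBl hu // hv // subrr.
- move=> _ [a0 [b [ma0 [hb ->]]]] t' a' ha' hk'.
  pose a2 := fun i : 'I_t'.+1 => if unlift ord0 i is Some i' then a' i' else a0.
  have ha2 : forall i, m (a2 i) by move=> i; rewrite /a2; case: unliftP => [i' _|_]; [apply: ha' | exact: ma0].
  have := IH b hb t'.+1 a2 ha2; rewrite addnS -addSn => /(_ hk').
  rewrite big_ord_recl /a2 unlift_none (eq_bigr (fun i => a' i)); last by move=> i _; rewrite liftK.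
  by move=> h; rewrite -[RHS]h; ring.
Qed.

Lemma S_nat (S : R -> Prop) : subring S -> forall k : nat, S k%:R.
Proof.
move=> [S1 [SB _]]; have S0 : S 0 by rewrite -(subrr 1); apply: (SB).
elim=> [|k IH]; first by rewrite mulr0n.
have -> : (k.+1)%:R = 1 - (0 - k%:R) :> R by rewrite mulrS sub0r opprK.
by apply: (SB) => //; apply: (SB).
Qed.

Lemma nakayama (S : R -> Prop) : subring S ->
  (forall y, exists s z, S s /\ J z /\ y = s + z) -> forall y, S y.
Proof.
move=> Ssub H; have [S1 [SB SM]] := Ssub.
have S0 : S 0 by rewrite -(subrr 1); apply: (SB).
have SD : forall a b, S a -> S b -> S (a + b).
  move=> a b ha hb; have -> : a + b = a - (0 - b) by rewrite sub0r opprK.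
  by apply: (SB) => //; apply: (SB).
pose Tj j y := exists s z, S s /\ pw j z /\ y = s + z.
have step : forall j, (forall b, pw j b -> Tj j.+1 b) -> forall y, pw j.+1 y -> Tj j.+2 y.
  move=> j Hj y hy; apply: (hy (Tj j.+2)).
  - by exists 0, 0; split => //; split; [apply: pw_0 | rewrite addr0].
  - move=> u v [s [z [hs [hz ->]]]] [s' [z' [hs' [hz' ->]]]].
    exists (s - s'), (z - z'); split; first exact: SB.
    by split; [apply: pw_B | rewrite opprD addrACA].
  - move=> _ [a [b [ma [hb ->]]]].
    have [s [jj [hs [hjj ea]]]] := H a.
    have [n [c [d [r [hcd ejj]]]]] := hjj.
    have [s' [jj' [hs' [hjj' er]]]] := H r.
    set t := s + p%:R * s'.
    have St : S t by apply: (SD) => //; apply: (SM) => //; apply: S_nat.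
    have mt : m t.
      apply: mD; last by apply: mMr.
      by have := mB ma (Jm hjj); rewrite ea addrK.
    have [s'' [z [hs'' [hz eb]]]] := Hj b hb.
    exists (t * s''), (t * z + (\sum_i c i * (d i * b)) + p%:R * (jj' * b)); split; first exact: SM.
    split.
      apply: pw_D; first apply: pw_D.
      + exact: pw_gen.
      + by apply: pw_sum => i; apply: pw_gen; [case: (hcd i) | apply: pw_gen => //; case: (hcd i)].
      + by apply: pw_gen => //; apply: pw_gen => //; apply: Jm.
    have es : \sum_i c i * (d i * b) = (\sum_i c i * d i) * b by rewrite mulr_suml; apply: eq_bigr => i _; rewrite mulrA.
    rewrite es ea ejj er eb /t; ring.
have all_j : forall j b, pw j b -> Tj j.+1 b.
  elim=> [|j IH] b hb.
    have [s [z [hs [hz ->]]]] := H b.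
    by exists s, z; split => //; split => //; apply: pw1; apply: Jm.
  exact: step.
have chain : forall j y, pw 1 y -> Tj j.+1 y.
  elim=> [|j IH] y hy; first by exists 0, y; rewrite add0r.
  have [s [z [hs [hz ->]]]] := IH y hy.
  have [s' [z' [hs' [hz' ->]]]] := all_j _ _ hz.
  by exists (s + s'), z'; split; [apply: (SD) | split => //; rewrite addrA].
have [k hk] := pw_nil.
move=> y; have [s [z [hs [hz ->]]]] := H y.
have [s' [z' [hs' [hz' ->]]]] := chain k z (pw1 (Jm hz)).
by rewrite (hk _ _ (leqnSn k) hz') addr0; apply: (SD).
Qed.

Lemma lam_lamK c v : lam c v = lamK c v.
Proof. by []. Qed.

Lemma maxS_J S : maximal_subring_same_residue m S -> forall y, J y -> S y.
Proof.
move=> [[Ssub [w nSw]] [Sres Smax]].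
have [S1 [SB SM]] := Ssub.
have S0 : S 0 by rewrite -(subrr 1); apply: (SB).
pose S' y := exists s z, S s /\ J z /\ y = s + z.
have S'sub : subring S'.
  split; first by exists 1, 0; split => //; split; [exact: J0 | rewrite addr0].
  split.
  - move=> u v [s [z [hs [hz ->]]]] [s' [z' [hs' [hz' ->]]]].
    exists (s - s'), (z - z'); split; first exact: SB.
    by split; [apply: JB | rewrite opprD addrACA].
  - move=> u v [s [z [hs [hz ->]]]] [s' [z' [hs' [hz' ->]]]].
    exists (s * s'), (s * z' + z * s' + z * z'); split; first exact: SM.
    split; last by ring.
    apply: JD; first apply: JD.
    + exact: JM.
    + by rewrite mulrC; apply: JM.
    + exact: JM.
case: (classic (exists w, ~ S' w)) => [hw|hw].
  move=> y jy; apply: (Smax S' _ _ y); first by split.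
  - by move=> a Sa; exists a, 0; split => //; split; [exact: J0 | rewrite addr0].
  - by exists 0, y; split => //; split => //; rewrite add0r.
exfalso; apply: nSw; apply: nakayama => // y.
by apply: NNPP => ny; apply: hw; exists y.
Qed.

Lemma S_exp (S : R -> Prop) : subring S -> forall a k, S a -> S (a ^+ k).
Proof.
move=> [S1 [_ SM]] a; elim=> [|k IH] Sa; first by rewrite expr0.
by rewrite exprS; apply: (SM) => //; apply: IH.
Qed.

Lemma max_is_Sc S : maximal_subring_same_residue m S ->
  exists c, nrm c /\ forall y, S y <-> Sc c y.
Proof.
move=> Smax0; have SJ := maxS_J Smax0.
have [[Ssub [w nSw]] [Sres Smax]] := Smax0.
have [S1 [SB SM]] := Ssub.
have S0 : S 0 by rewrite -(subrr 1); apply: (SB).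
have SD : forall a b, S a -> S b -> S (a + b).
  move=> a b ha hb; have -> : a + b = a - (0 - b) by rewrite sub0r opprK.
  by apply: (SB) => //; apply: (SB).
have Sq : forall a, S (a ^+ q).
  move=> a; have [s [hs ms]] := Sres a.
  have -> : a ^+ q = (a ^+ q - s ^+ q) + s ^+ q by rewrite subrK.
  by apply: SD; [apply: SJ; apply: tau_cong | apply: S_exp].
pose U v := exists z, S z /\ m z /\ crd z = v.
have U0 : U 0 by exists 0; split => //; split; [exact: m0 | apply: crd_J; exact: J0].
have UD : forall u v, U u -> U v -> U (u + v).
  move=> _ _ [z [hz [mz <-]]] [z' [hz' [mz' <-]]].
  by exists (z + z'); split; [apply: SD | split; [apply: mD | rewrite crd_add]].
have UZ : forall b u, U u -> U (b *: u).
  move=> b _ [z [hz [mz <-]]]; exists ((repr b) ^+ q * z); split; first by apply: (SM).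
  by split; [apply: mM | rewrite crd_scale // piq reprK].
have Unot : exists v0, ~ U v0.
  apply: NNPP => hn; apply: nSw.
  have mS : forall y, m y -> S y.
    move=> y my.
    have [z [hz [mz ez]]] : U (crd y) by apply: NNPP => nu; apply: hn; exists (crd y).
    have jyz : J (y - z) by apply: crd_eq0; [apply: mB | rewrite crd_sub // ez subrr].
    have -> : y = (y - z) + z by rewrite subrK.
    by apply: SD => //; apply: SJ.
  have [s [hs ms]] := Sres w.
  have -> : w = (w - s) + s by rewrite subrK.
  by apply: SD => //; apply: mS.
have [c [nc hc]] := hyperplane U0 UD UZ Unot.
exists c; split => //.
have SSc : forall y, S y -> Sc c y.
  move=> y Sy; rewrite /Sc lam_lamK; apply: hc.
  by exists (D y); split; [apply: (SB) | split; [apply: D_m|]].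
move=> y; split; first exact: SSc.
apply: (Smax (Sc c)) => //.
exact: Sc_proper (nrm_neq0 nc).
Qed.

Lemma main_count :
  exactly_n_members (maximal_subring_same_residue m) ((q ^ rho - 1) %/ (q - 1)).
Proof.
pose NS := [set c : 'rV[F]_rho | nrm c].
have hcnt := count_nrm F rho.
rewrite cardF -/NS in hcnt.
have -> : ((q ^ rho - 1) %/ (q - 1) = #|NS|)%N.
  rewrite !subn1 -hcnt mulnK //.
  by rewrite -subn1 subn_gt0 -cardF; exact: (finNzRing_gt1 F).
exists (fun i => Sc (enum_val i)); split; last split.
- move=> i; have nc : nrm (enum_val i) by have := enum_valP i; rewrite inE.
  split; first exact: Sc_proper (nrm_neq0 nc).
  split; first exact: Sc_res.
  by move=> T PT sub y Ty; apply: (Sc_max (nrm_neq0 nc) PT).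
- move=> i j hij; apply: enum_val_inj.
  have nci : nrm (enum_val i) by have := enum_valP i; rewrite inE.
  have ncj : nrm (enum_val j) by have := enum_valP j; rewrite inE.
  apply: nrm_inj => // v.
  have [z [mz <-]] := crd_surj v.
  by rewrite -!lam_lamK -!Sc_m //; apply: hij.
- move=> S hS; have [c [nc hc]] := max_is_Sc hS.
  have cNS : c \in NS by rewrite inE.
  exists (enum_rank_in cNS c); rewrite enum_rankK_in //.
Qed.

End Basic.

Local Close Scope ring_scope.

Theorem corollary31 (R : comNzRingType) (p N q rho : nat) (m : R -> Prop) :
  condition_star p N q m ->
  cotangent_dim p m rho ->
  exactly_n_members (maximal_subring_same_residue m) ((q ^ rho - 1) %/ (q - 1)).
Proof.
move=> [pprime [N0 [[hc _] [mmax [[reps [rinj rsurj]] mnil]]]]] [x [hxm [hxs hxi]]].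
have mp : m (p%:R)%R.
  case: N N0 hc => // N' _ hc.
  apply: (m_exp mmax (n := N')); rewrite -natrX hc; exact: m0.
exact: (main_count mmax mp pprime (q_pow mmax mp pprime rinj rsurj)
  (logq_gt0 mmax mp pprime rinj rsurj) (Fq_F mmax rinj rsurj) rinj rsurj hxm hxs hxi mnil).
Qed.
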